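(* For every pointed topological space $(X,x_0)$ (regarded as a pointed epitopological and pseudotopological space), $R_2\,\pi_1^{\mathrm{epi}}(X,x_0)=\pi_1^{\mathrm{qtop}}(X,x_0)$ and $R\,\pi_1^{\mathrm{ps}}(X,x_0)=\pi_1^{\mathrm{qtop}}(X,x_0)$; that is, the underlying groups are all the fundamental group $\pi_1(X,x_0)$ and the topologies obtained by reflecting the epitopological and pseudotopological structures are the quotient topology of $\pi_1^{\mathrm{qtop}}(X,x_0)$.
   Context: For a set $X$, $U(X)$ is the set of ultrafilters on $X$, $\dot x$ the principal ultrafilter at $x$; $f_*\mathscr F=\{S:f^{-1}(S)\in\mathscr F\}$. A pseudotopological space is a set $X$ with $u\subset U(X)\times X$ containing all $(\dot x,x)$; write $\mathscr U\to x$; for a filter, $\mathscr F\to x$ means every finer ultrafilter converges to $x$. Continuous maps: $\mathscr U\to x\Rightarrow f_*\mathscr U\to f(x)$. Subspaces and products carry initial structures; the final structure for $q\colon X\to Z$: $\mathscr U\to z$ iff $\mathscr U=\dot z$ or $\mathscr U=q_*\mathscr V$, $z=q(x)$ with $\mathscr V\to x$. Topological spaces are regarded as pseudotopological via ultrafilter convergence. For pseudotopological $X,Y$, $Y^X$ is the set of continuous maps with: a filter $\mathscr F\to f$ iff for every filter $\mathscr G\to x$, $\mathrm{ev}_*(\mathscr F\times\mathscr G)\to f(x)$. A pseudotopological space is epitopological if its structure is initial w.r.t. some family of maps $X\to Z_j^{Y_j}$, $Y_j,Z_j$ topological; these form the cartesian closed category $\mathsf{EpiTop}$. For a pseudotopological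 space $A$, $RA$ is the topological space on $|A|$ in which $S$ is open iff $S\in\mathscr U$ whenever $\mathscr U\to a\in S$; $R_2$ denotes $R$ applied to epitopological spaces. $\Omega^{\mathrm{ps}}(X,x_0)$: loops $l\colon[0,1]\to X$ at $x_0$ with the subspace structure of $X^{[0,1]}$; $\Omega^{\mathrm{epi}}$: same using the exponential and subspaces of $\mathsf{EpiTop}$; $\Omega^{\mathrm{top}}(X,x_0)$: based loops with the subspace topology of the compact-open topology. $\pi_0^{\mathrm{ps}}A$: path components with the final pseudotopology w.r.t. the projection; $\pi_0^{\mathrm{epi}}A$: path components with the smallest epitopological structure making the projection continuous; $\pi_0^{\mathrm{top}}A$: path components with the quotient topology. $\pi_1^{\mathrm{ps}}=\pi_0^{\mathrm{ps}}\Omega^{\mathrm{ps}}$, $\pi_1^{\mathrm{epi}}=\pi_0^{\mathrm{epi}}\Omega^{\mathrm{epi}}$, and $\pi_1^{\mathrm{qtop}}(X,x_0)=\pi_0^{\mathrm{top}}\Omega^{\mathrm{top}}(X,x_0)$ (Biss's topologized fundamental group, a quasitopological group), each with group structure induced by loop concatenation. *)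

(* Defs.v *)
(* Topological spaces are mathcomp
   [topologicalType]s; the unit interval is the subspace [0,1] of the
   Stdlib reals (a realType via Rstruct), with the initial (= subspace)
   topology of [set_type]; the compact-open topology is mathcomp's
   {compact-open, _ -> _}. *)
From HB Require Import structures.
From mathcomp Require Import all_boot all_order all_algebra.
From mathcomp Require Import all_classical all_reals all_analysis.
From mathcomp Require Import Rstruct Rstruct_topology.
Import Order.TTheory GRing.Theory Num.Theory.

Set Implicit Arguments.
Unset Strict Implicit.
Unset Printing Implicit Defensive.

Local Open Scope classical_set_scope.
Local Open Scope ring_scope.

Notation I01 := (set_type ([set` `[0%R, 1%R]] : set Rdefinitions.R)).

Lemma zero_in01 : (0 : Rdefinitions.R) \in ([set` `[0%R, 1%R]] : set Rdefinitions.R).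
Proof. by rewrite inE /= in_itv /= lexx ler01. Qed.
Lemma one_in01 : (1 : Rdefinitions.R) \in ([set` `[0%R, 1%R]] : set Rdefinitions.R).
Proof. by rewrite inE /= in_itv /= lexx ler01. Qed.

Definition i0 : I01 := exist _ 0 zero_in01.
Definition i1 : I01 := exist _ 1 one_in01.

Definition is_filter {T} (F : set_system T) : Prop :=
  [/\ F setT, (forall A B, F A -> F B -> F (A `&` B))
    & (forall A B, A `<=` B -> F A -> F B)].

Definition is_ultra {T} (U : set_system T) : Prop :=
  [/\ is_filter U, ~ U set0 & (forall A, U A \/ U (~` A))].

Definition principal {T} (x : T) : set_system T := [set A | A x].

Definition pushf {S T} (f : S -> T) (F : set_system S) : set_system T :=
  [set B | F (f @^-1` B)].

Definition prodF {S T} (F : set_system S) (G : set_system T)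
  : set_system (S * T) :=
  [set W | exists A B, [/\ F A, G B & A `*` B `<=` W]].

(* ---------- convergence (pseudotopological) spaces ----------
   A space is a carrier with a relation between set systems and points;
   only its restriction to ultrafilters is ever used (all notions below
   quantify over ultrafilters), so this is a subset of U(X) x X. *)
Record psSpace := PsSpace {
  ps_car :> Type;
  ps_conv : set_system ps_car -> ps_car -> Prop }.

Definition fconv (A : psSpace) (F : set_system A) (a : A) : Prop :=
  forall U, is_ultra U -> F `<=` U -> ps_conv U a.

Definition ps_cont (A B : psSpace) (f : A -> B) : Prop :=
  forall (U : set_system A) (a : A), is_ultra U -> ps_conv U a ->
    ps_conv (pushf f U) (f a).

Definition ps_of_top (T : topologicalType) : psSpace :=
  @PsSpace T (fun U x => nbhs x `<=` U).

Definition cmap (A B : psSpace) := {f : A -> B | ps_cont f}.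

Definition ev {A B : psSpace} (p : cmap A B * A) : B := sval p.1 p.2.

Definition ps_exp (A B : psSpace) : psSpace :=
  @PsSpace (cmap A B) (fun F f =>
    forall (G : set_system A) (x : A), is_filter G -> fconv G x ->
      fconv (pushf (@ev A B) (prodF F G)) (sval f x)).

Definition ps_sub (A : psSpace) (P : A -> Prop) : psSpace :=
  @PsSpace {a : A | P a} (fun U a => ps_conv (pushf sval U) (sval a)).

Definition Ropen (A : psSpace) (S : set A) : Prop :=
  forall (U : set_system A) (a : A), is_ultra U -> ps_conv U a -> S a -> U S.

Definition epitop (A : psSpace) : Prop :=
  exists (J : Type) (Y Z : J -> topologicalType)
         (f : forall j, A -> cmap (ps_of_top (Y j)) (ps_of_top (Z j))),
  forall (U : set_system A) (a : A), is_ultra U ->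
    (ps_conv U a <->
     forall j, @ps_conv (ps_exp (ps_of_top (Y j)) (ps_of_top (Z j)))
                 (pushf (f j) U) (f j a)).

Definition ps_path_rel (A : psSpace) (a b : A) : Prop :=
  exists p : I01 -> A, [/\ @ps_cont (ps_of_top I01) A p, p i0 = a & p i1 = b].

Definition ps_comp (A : psSpace) := {C : set A | exists a, C = ps_path_rel a}.

Definition ps_proj (A : psSpace) (a : A) : ps_comp A :=
  exist _ (ps_path_rel a) (ex_intro _ a erefl).

Definition pi0_ps (A : psSpace) : psSpace :=
  @PsSpace (ps_comp A) (fun U z =>
    U = principal z \/
    exists (V : set_system A) (a : A),
      [/\ is_ultra V, ps_conv V a, U = pushf (@ps_proj A) V & ps_proj a = z]).

Definition pi0_epi (A : psSpace) : psSpace :=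
  @PsSpace (ps_comp A) (fun U z =>
    forall c : set_system (ps_comp A) -> ps_comp A -> Prop,
      epitop (@PsSpace (ps_comp A) c) ->
      @ps_cont A (@PsSpace (ps_comp A) c) (@ps_proj A) ->
      c U z).

Definition is_loop (X : topologicalType) (x0 : X) (f : I01 -> X) : Prop :=
  f i0 = x0 /\ f i1 = x0.

Definition loop_ps (X : topologicalType) (x0 : X) : psSpace :=
  @ps_sub (ps_exp (ps_of_top I01) (ps_of_top X))
          (fun f => is_loop x0 (sval f)).

(* Since [0,1] and X
   are topological, X^[0,1] is epitopological, and EpiTop is a full
   subcategory of PsTop closed under products and subspaces, so the EpiTop
   exponential and subspace coincide with the pseudotopological ones. *)
Definition loop_epi (X : topologicalType) (x0 : X) : psSpace := loop_ps x0.

Definition pi1_ps (X : topologicalType) (x0 : X) : psSpace := pi0_ps (loop_ps x0).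
Definition pi1_epi (X : topologicalType) (x0 : X) : psSpace := pi0_epi (loop_epi x0).

Definition loop_set (X : topologicalType) (x0 : X)
  : set {compact-open, I01 -> X} :=
  [set f | continuous (f : I01 -> X) /\ is_loop x0 f].

Definition top_path_rel (T : topologicalType) (a b : T) : Prop :=
  exists p : I01 -> T, [/\ continuous p, p i0 = a & p i1 = b].

Definition top_comp (T : topologicalType) :=
  {C : set T | exists a, C = top_path_rel a}.

Definition top_proj (T : topologicalType) (a : T) : top_comp T :=
  exist _ (top_path_rel a) (ex_intro _ a erefl).

Definition quot_open (T : topologicalType) (S : set (top_comp T)) : Prop :=
  open (@top_proj T @^-1` S).

Definition pi1_qtop (X : topologicalType) (x0 : X) :=
  top_comp (loop_set x0 : Type).
Definition qtop_open (X : topologicalType) (x0 : X) (S : set (pi1_qtop x0)) :=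
  @quot_open (loop_set x0 : Type) S.

(* the underlying loops of a class, to compare the three carriers *)
Definition cls_ps (X : topologicalType) (x0 : X) (c : ps_comp (loop_ps x0))
  : set (I01 -> X) :=
  (fun l : loop_ps x0 => sval (sval l)) @` sval c.

Definition cls_top (X : topologicalType) (x0 : X) (c : pi1_qtop x0)
  : set (I01 -> X) :=
  (fun l : (loop_set x0 : Type) => (sval l : I01 -> X)) @` sval c.

(* Main.v *)
Require Import Defs.
From HB Require Import structures.
From mathcomp Require Import all_boot all_order all_algebra.
From mathcomp Require Import all_classical all_reals all_analysis.
From mathcomp Require Import Rstruct Rstruct_topology.
Set Implicit Arguments.
Unset Strict Implicit.
Unset Printing Implicit Defensive.
Local Open Scope classical_set_scope.
Section Filt.
Context {T : Type}.

Lemma is_filterP (F : set_system T) : Filter F -> is_filter F.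
Proof. by move=> FF; split; [exact: filterT | exact: filterI | exact: filterS]. Qed.

Lemma filterP_is (F : set_system T) : is_filter F -> Filter F.
Proof. by case=> h1 h2 h3; split. Qed.

Definition genF (F : set_system T) (A : set T) : set_system T :=
  [set D | exists C, F C /\ C `&` ~` A `<=` D].

Lemma genF_proper (F : set_system T) A : is_filter F -> ~ F A -> ProperFilter (genF F A).
Proof.
case=> FT FI FS nFA; split.
  case=> C [FC CA]; apply: nFA; apply: FS FC => x Cx.
  by apply: contrapT => nAx; apply: (CA x).
split.
- by exists setT; split.
- move=> P Q [C [FC CP]] [D [FD DQ]]; exists (C `&` D); split; first exact: FI.
  by move=> x [[Cx Dx] nAx]; split; [apply: CP | apply: DQ].
- by move=> P Q PQ [C [FC CP]]; exists C; split => // x /CP /PQ.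
Qed.

Lemma ultra_of (U : set_system T) : UltraFilter U -> is_ultra U.
Proof.
move=> UU; split; first exact: is_filterP.
  exact: filter_not_empty.
move=> A; have [//|nUA] := pselect (U A); [by left|right].
have Uf := is_filterP (@filter_filter _ _ (@ultra_proper _ _ UU)).
have Gp := genF_proper Uf nUA.
have sUG : U `<=` genF U A.
  by move=> B UB; exists B; split => // x [].
have := max_filter Gp sUG => eGU; rewrite -eGU.
by exists setT; split; [exact: filterT | move=> x [_]].
Qed.

Lemma UL (F : set_system T) (A : set T) : is_filter F ->
  (forall U, is_ultra U -> F `<=` U -> U A) -> F A.
Proof.
move=> Ff H; apply: contrapT => nFA.
have [U [UU sGU]] := ultraFilterLemma (genF_proper Ff nFA).
have Uu := ultra_of UU.
have sFU : F `<=` U by move=> B FB; apply: sGU; exists B; split => // x [].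
have UA := H U Uu sFU.
have UnA : U (~` A) by apply: sGU; exists setT; split; [case: Ff | move=> x [_]].
case: Uu => [[_ UI _] U0 _]; apply: U0.
by have := UI _ _ UA UnA; congr U; apply/seteqP; split => x // [].
Qed.

Lemma ultra_push {S} (f : T -> S) (U : set_system T) : is_ultra U -> is_ultra (pushf f U).
Proof.
case=> [[UT UI US] U0 Uc]; split.
- split => //.
    by move=> A B; apply: UI.
  by move=> A B AB; apply: US => x /AB.
- exact: U0.
- by move=> A; exact: Uc.
Qed.

Lemma filter_push {S} (f : T -> S) (U : set_system T) : is_filter U -> is_filter (pushf f U).
Proof.
case=> [UT UI US]; split => //.
  by move=> A B; apply: UI.
by move=> A B AB; apply: US => x /AB.
Qed.

Lemma principal_ultra (x : T) : is_ultra (principal x).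
Proof.
split; first split.
- by [].
- by move=> A B.
- by move=> A B AB /AB.
- by [].
- by move=> A; have [h|h] := pselect (A x); [left|right].
Qed.

End Filt.

Lemma prodF_filter {S T} (F : set_system S) (G : set_system T) :
  is_filter F -> is_filter G -> is_filter (prodF F G).
Proof.
case=> [FT FI FS] [GT GI GS]; split.
- by exists setT, setT; split.
- move=> P Q [A [B [FA GB ABP]]] [C [D [FC GD CDQ]]].
  exists (A `&` C), (B `&` D); split; [exact: FI|exact: GI|].
  by move=> [x y] [/= [Ax Cx] [By Dy]]; split; [apply: ABP|apply: CDQ].
- by move=> P Q PQ [A [B [FA GB ABP]]]; exists A, B; split => // z /ABP /PQ.
Qed.

Lemma fconv_top (T : topologicalType) (F : set_system T) (x : T) :
  is_filter F -> fconv (A := ps_of_top T) F x <-> nbhs x `<=` F.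
Proof.
move=> Ff; split.
  move=> H A nA; apply: UL => // U Uu FU; exact: (H U Uu FU A nA).
by move=> H U Uu FU; apply: subset_trans H FU.
Qed.

Lemma ps_cont_top (S T : topologicalType) (f : S -> T) :
  ps_cont (A := ps_of_top S) (B := ps_of_top T) f <-> continuous f.
Proof.
split.
  move=> H x A nA; apply: (UL (F := nbhs x) (A := f @^-1` A)).
    exact: is_filterP.
  move=> U Uu sU; exact: (H U x Uu sU A nA).
move=> cf U x Uu /= sU A nA; apply: sU; exact: cf.
Qed.

Lemma sig_eqP {T : Type} {P : T -> Prop} (a b : {x | P x}) : sval a = sval b -> a = b.
Proof. case: a b => [x px] [y py] /= e; subst y; congr exist; exact: Prop_irrelevance. Qed.

Definition qps (A : psSpace) : Type := ps_comp A.
HB.instance Definition _ (A : psSpace) := gen_eqMixin (qps A).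
HB.instance Definition _ (A : psSpace) := gen_choiceMixin (qps A).

Section QTop.
Variable A : psSpace.
Let op : set_system (qps A) := fun T => Ropen (A := pi0_ps A) T.

Let opT : op setT. Proof. by move=> U z [[]]. Qed.
Let opI : setI_closed op.
Proof.
move=> P Q oP oQ U z Uu cz [Pz Qz].
by case: (Uu) => [[_ UI _] _ _]; apply: UI; [exact: (oP U z Uu cz Pz) | exact: (oQ U z Uu cz Qz)].
Qed.
Let op_bigU (I : Type) (f : I -> set (qps A)) : (forall i, op (f i)) ->
    op (\bigcup_i f i).
Proof.
move=> hf U z Uu cz [i _ fiz].
case: (Uu) => [[_ _ US] _ _]; apply: US (hf i U z Uu cz fiz) => w fw; by exists i.
Qed.

HB.instance Definition _ := isOpenTopological.Build (qps A) opT opI op_bigU.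
End QTop.

Definition qpsT (A : psSpace) : topologicalType := qps A.

Lemma nbhs_qps (A : psSpace) (a : qpsT A) (U : set_system (qpsT A)) : is_filter U ->
  nbhs a `<=` U <-> (forall T, Ropen (A := pi0_ps A) T -> T a -> U T).
Proof.
case=> [UT UI US]; split.
  by move=> H T oT Ta; apply: H; apply: open_nbhs_nbhs; split.
move=> H B; rewrite nbhsE /=; case=> W [oW Wa] WB.
exact: (US _ _ WB (H W oW Wa)).
Qed.

Lemma cst_cont (A : psSpace) (a : qpsT A) :
  ps_cont (A := ps_of_top bool) (B := ps_of_top (qpsT A)) (fun _ => a).
Proof.
move=> U y [[UT _ US] _ _] _ B nB.
have Ba : B a := nbhs_singleton nB.
exact: (US setT _ (fun z _ => Ba) UT).
Qed.

Definition cst_map (A : psSpace) (a : qpsT A) : cmap (ps_of_top bool) (ps_of_top (qpsT A)) :=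
  exist _ _ (@cst_cont A a).

Lemma Ropen_epi_ps (A : psSpace) (Hpr : forall a : A, ps_conv (principal a) a)
  (T : set (ps_comp A)) :
  Ropen (A := pi0_epi A) T <-> Ropen (A := pi0_ps A) T.
Proof.
split.
  move=> H U z Uu cz Tz; apply: (H U z Uu) => //.
  move=> c ec pc; case: cz => [-> | [V [a [Vu Va -> <-]]]].
    case: z Tz => C [a eC] Tz.
    have -> : exist (fun C => exists a, C = ps_path_rel a) C (ex_intro _ a eC) = ps_proj a.
      by apply: sig_eqP.
    exact: (pc _ a (principal_ultra a) (Hpr a)).
  exact: (pc V a Vu Va).
move=> H U z Uu cz Tz.
pose c0 (U : set_system (ps_comp A)) (z : ps_comp A) :=
  forall T', Ropen (A := pi0_ps A) T' -> T' z -> U T'.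
have pcont : ps_cont (A := A) (B := @PsSpace (ps_comp A) c0) (@ps_proj A).
  move=> V a Vu Va T' HT' T'a.
  apply: (HT' (pushf (@ps_proj A) V) (ps_proj a) (ultra_push _ Vu)) => //.
  by right; exists V, a; split.
suff ep : epitop (@PsSpace (ps_comp A) c0) by exact: (cz c0 ep pcont T H Tz).
exists unit, (fun _ => bool), (fun _ => qpsT A), (fun _ a => cst_map a).
move=> U' a Uu'.
have Uf' : is_filter U' by case: Uu'.
transitivity (nbhs (a : qpsT A) `<=` U'); first by rewrite nbhs_qps.
split.
  move=> sU [] G x Gf Gc.
  have pf : is_filter (pushf (@ev (ps_of_top bool) (ps_of_top (qpsT A)))
                 (prodF (pushf (cst_map (A:=A)) U') G)).
    by apply: filter_push; apply: prodF_filter => //; exact: filter_push.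
  apply/(fconv_top _ pf) => B nB.
  exists (cst_map (A:=A) @` B), setT; split.
  - case: Uf' => _ _ US.
    by apply: (US B _ _ (sU B nB)) => b Bb; exists b.
  - by case: Gf.
  - by case=> g y [/= [b Bb <-] _].
move=> H2 B nB.
have pf : is_filter (principal true) by case: (principal_ultra true).
have fc : fconv (A := ps_of_top bool) (principal true) true.
  by apply/fconv_top => // P /nbhs_singleton.
have := H2 tt (principal true) true pf fc.
have pf2 : is_filter (pushf (@ev (ps_of_top bool) (ps_of_top (qpsT A)))
                 (prodF (pushf (cst_map (A:=A)) U') (principal true))).
  by apply: filter_push; apply: prodF_filter => //; exact: filter_push.
move/(fconv_top _ pf2) => /(_ B nB) [A' [B' [UA' B't AB]]].
case: Uf' => _ _ US; apply: (US _ _ _ UA') => b Ab.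
exact: (AB (cst_map b, true)).
Qed.

Lemma nbhs_sT {T : topologicalType} (A : set T) (m : A) (Q : set A) :
  nbhs m Q <-> exists B, nbhs (set_val m) B /\ set_val @^-1` B `<=` Q.
Proof.
split.
  rewrite nbhsE /= => -[W [[B oB eB] Wm] WQ].
  exists B; split; last by rewrite eB.
  by exists B => //; split => //; rewrite -eB in Wm.
case=> B [nB BQ]; move: nB; rewrite nbhsE => -[B' [oB' B'm] B'B].
rewrite nbhsE; exists (set_val @^-1` B'); last by move=> z /B'B /BQ.
by split => //; exists B'.
Qed.

Lemma compact_sT {T : topologicalType} (A : set T) (K : set A) :
  compact (set_val @` K) -> compact K.
Proof.
move=> cK F PF FK.
have [x [[k Kk <-] clx]] : set_val @` K `&` cluster (set_val @ F) !=set0.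
  apply: cK.
  have sub : K `<=` set_val @^-1` (set_val @` K) by move=> z Kz; exists z.
  exact: (filterS sub FK).
exists k; split => // P Q FP /nbhs_sT [B [nB BQ]].
have := clx (set_val @` P) B _ nB.
case=> [|y [[p Pp <-] Bp]].
  have sub : P `<=` set_val @^-1` (set_val @` P) by move=> z Pz; exists z.
  exact: (filterS sub FP).
by exists p; split => //; apply: BQ.
Qed.

Lemma I01_compact : compact [set: I01].
Proof.
apply: compact_sT.
have -> : set_val @` [set: I01] = `[0%R, 1%R]%classic.
  apply/seteqP; split => x.
    by case=> -[y hy] _ <-; exact: (set_mem hy).
  move=> hx; exists (exist _ x (mem_set hx)) => //.
exact: segment_compact.
Qed.

Lemma I01_regular : regular_space I01.
Proof. exact: uniform_regular. Qed.

Lemma LC (X : topologicalType) (f : I01 -> X) (x : I01) (O : set X) :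
  continuous f -> open O -> O (f x) ->
  exists K : set I01, [/\ compact K, nbhs x K & f @` K `<=` O].
Proof.
move=> cf oO Ofx.
have [R Rx RO] : exists2 R, nbhs x R & closure R `<=` f @^-1` O.
  have nO : nbhs x (f @^-1` O) by apply: cf; exact: open_nbhs_nbhs.
  have [R ? ?] := I01_regular nO.
  by exists R.
exists (closure R); split.
- apply: (subclosed_compact _ I01_compact) => //; exact: closed_closure.
- by apply: filterS Rx; exact: subset_closure.
- by move=> _ [z /RO Oz <-].
Qed.

Section Core.
Context {X : topologicalType}.
Local Notation Ips := (ps_of_top I01).
Local Notation Xps := (ps_of_top X).
Local Notation E := (ps_exp Ips Xps).
Local Notation CM := (cmap Ips Xps).

Lemma coreB (U : set_system CM) (f : CM) : is_ultra U ->
  @ps_conv E U f <-> (forall K O, compact K -> open O ->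
     sval f @` K `<=` O -> U [set g : CM | sval g @` K `<=` O]).
Proof.
move=> Uu; have Uf : is_filter U by case: Uu.
have UF := filterP_is Uf.
split.
  move=> Hc K O cK oO fKO.
  have cv : forall x, K x -> prodF U (nbhs x) (@ev Ips Xps @^-1` O).
    move=> x Kx.
    have nf : is_filter (nbhs x) by exact: is_filterP.
    have fc : fconv (A := Ips) (nbhs x) x by apply/fconv_top.
    have := Hc (nbhs x) x nf fc.
    have pf : is_filter (pushf (@ev Ips Xps) (prodF U (nbhs x))).
      by apply: filter_push; exact: prodF_filter.
    move/(fconv_top _ pf); apply.
    apply: open_nbhs_nbhs; split => //; apply: fKO; by exists x.
  move/compact_near_coveringP: cK => /(_ _ U (fun g y => O (sval g y)) UF).
  move=> Hcov; apply: (filterS _ (Hcov _)).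
    by move=> g gK _ [y Ky <-]; exact: gK.
  move=> x Kx; have [A [B [UA nB ABO]]] := cv x Kx.
  exists (B, A); first by split.
  by case=> y g [/= By Ag]; exact: (ABO (g, y)).
move=> H G x Gf Gc.
have pf : is_filter (pushf (@ev Ips Xps) (prodF U G)).
  by apply: filter_push; exact: prodF_filter.
apply/(fconv_top _ pf).
move=> N.
rewrite nbhsE /=; case=> O [oO Ofx] ON.
have cf : continuous (sval f) by apply/ps_cont_top; exact: (svalP f).
have [K [cK nK fKO]] := LC cf oO Ofx.
have GK : G K by move/(fconv_top _ Gf): Gc; apply.
exists [set g : CM | sval g @` K `<=` O], K; split => //; first exact: H.
by case=> g y [/= gK Ky]; apply: ON; apply: gK; exists y.
Qed.

End Core.

Lemma Ropen_pi0 (A : psSpace) (T : set (ps_comp A)) :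
  Ropen (A := pi0_ps A) T <-> Ropen (A := A) (@ps_proj A @^-1` T).
Proof.
split.
  move=> H V a Vu Va Ta; apply: (H (pushf (@ps_proj A) V) (ps_proj a)) => //.
    exact: ultra_push.
  by right; exists V, a; split.
move=> H U z Uu [-> | [V [a [Vu Va -> <-]]]] Tz; first by [].
exact: (H V a Vu Va Tz).
Qed.

Section Loops.
Context {X : topologicalType} (x0 : X).
Local Notation Ips := (ps_of_top I01).
Local Notation Xps := (ps_of_top X).
Local Notation CM := (cmap Ips Xps).
Local Notation LP := (loop_ps x0).
Local Notation LT := (loop_set x0 : Type).

Definition fps (m : LP) : I01 -> X := sval (sval m).

Lemma phi_proof (m : LP) : (fps m : {compact-open, I01 -> X}) \in loop_set x0.
Proof.
apply: mem_set; split; last exact: (svalP m).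
by apply/ps_cont_top; exact: (svalP (sval m)).
Qed.

Definition phi (m : LP) : LT :=
  @exist {compact-open, I01 -> X} (fun f => f \in loop_set x0) (fps m) (@phi_proof m).

Lemma psi_proof1 (n : LT) : ps_cont (A := Ips) (B := Xps) (set_val n : I01 -> X).
Proof. by apply/ps_cont_top; case: (set_valP n). Qed.

Lemma psi_proof2 (n : LT) :
  is_loop x0 (sval (@exist (Ips -> Xps) (@ps_cont Ips Xps) (set_val n : I01 -> X) (@psi_proof1 n))).
Proof. by case: (set_valP n). Qed.

Definition psi (n : LT) : LP :=
  @exist CM (fun f => is_loop x0 (sval f)) _ (@psi_proof2 n).



Lemma psiK (m : LP) : psi (phi m) = m.
Proof. by apply: sig_eqP; apply: sig_eqP. Qed.

Lemma phiK (n : LT) : phi (psi n) = n.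
Proof. by apply: sig_eqP. Qed.

Lemma convLP (U : set_system LP) (m : LP) : is_ultra U ->
  @ps_conv LP U m <-> (forall K O, compact K -> open O ->
     fps m @` K `<=` O -> U [set m' : LP | fps m' @` K `<=` O]).
Proof.
move=> Uu; have := @coreB X (pushf sval U) (sval m) (ultra_push _ Uu).
by [].
Qed.

Lemma convLT (V : set_system LT) (n : LT) : is_filter V ->
  nbhs n `<=` V <-> (forall K O, compact K -> open O ->
     (set_val n : I01 -> X) @` K `<=` O ->
     V [set n' : LT | (set_val n' : I01 -> X) @` K `<=` O]).
Proof.
move=> Vf; have VF := filterP_is Vf; split.
  move=> H K O cK oO nKO; apply: H; apply/nbhs_sT.
  exists [set g : {compact-open, I01 -> X} | g @` K `<=` O]; split => //.
  by apply: open_nbhs_nbhs; split => //; exact: compact_open_open.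
move=> H Q /nbhs_sT [B [nB BQ]].
have : (set_val @ V) --> (set_val n : {compact-open, I01 -> X}).
  by apply/compact_open_cvgP => K O cK oO nKO; exact: H.
move/(_ B nB) => VB; exact: (filterS BQ VB).
Qed.

Lemma conv_phi (U : set_system LP) (m : LP) : is_ultra U ->
  @ps_conv LP U m <-> nbhs (phi m) `<=` pushf phi U.
Proof.
move=> Uu; rewrite convLP // convLT //; last by apply: filter_push; case: Uu.
Qed.

Lemma conv_psi (V : set_system LT) (n : LT) : is_ultra V ->
  nbhs n `<=` V <-> @ps_conv LP (pushf psi V) (psi n).
Proof.
move=> Vu; rewrite convLP; last exact: ultra_push.
rewrite convLT; last by case: Vu.
by [].
Qed.


Lemma path_equiv (m m' : LP) :
  ps_path_rel m m' <-> top_path_rel (phi m) (phi m').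
Proof.
split.
  case=> p [pc p0 p1]; exists (phi \o p); split; [|by rewrite /= p0|by rewrite /= p1].
  move=> t Q nQ.
  apply: (UL (F := nbhs t) (A := (phi \o p) @^-1` Q)); first exact: is_filterP.
  move=> U Uu sU.
  have := pc U t Uu sU.
  move/(@conv_phi (pushf p U) (p t) (ultra_push p Uu)); exact.
case=> q [qc q0 q1]; exists (psi \o q); split; [|by rewrite /= q0 psiK|by rewrite /= q1 psiK].
move=> U t Uu sU.
apply/(@conv_psi (pushf q U) (q t) (ultra_push q Uu)).
move=> Q nQ; apply: sU; exact: qc.
Qed.

Lemma cls_eq (m : LP) : cls_ps (ps_proj m) = cls_top (top_proj (phi m)).
Proof.
apply/seteqP; split => g.
  by case=> l hl <-; exists (phi l) => //; apply/path_equiv.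
case=> l hl <-; exists (psi l) => //; apply/path_equiv; by rewrite phiK.
Qed.

Lemma claim1 (L : set (I01 -> X)) :
  (exists c : pi1_ps x0, cls_ps c = L) <-> (exists c : pi1_qtop x0, cls_top c = L).
Proof.
split.
  case=> [[C [a eC]] <-]; subst C; exists (top_proj (phi a)); by rewrite -cls_eq.
case=> [[C [n eC]] <-]; subst C; exists (ps_proj (psi n)); by rewrite cls_eq phiK.
Qed.

Lemma Ropen_LP (Q : set LT) : Ropen (A := LP) (phi @^-1` Q) <-> open Q.
Proof.
split.
  move=> H; rewrite openE => n Qn.
  apply: (UL (F := nbhs n) (A := Q)); first exact: is_filterP.
  move=> V Vu sV.
  have cv : @ps_conv LP (pushf psi V) (psi n) by apply/conv_psi.
  have := H _ _ (ultra_push psi Vu) cv; rewrite /= phiK => /(_ Qn).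
  have e : psi @^-1` (phi @^-1` Q) = Q by apply/seteqP; split => n' /=; rewrite phiK.
  by rewrite /pushf /= e.
move=> oQ U m Uu Um Qm.
apply: ((@conv_phi U m Uu).1 Um); exact: open_nbhs_nbhs.
Qed.

Lemma claim4 (S : set (set (I01 -> X))) :
  Ropen (A := pi1_ps x0) [set c | S (cls_ps c)] <->
  qtop_open (x0 := x0) [set c | S (cls_top c)].
Proof.
rewrite /pi1_ps Ropen_pi0 /qtop_open /quot_open.
have -> : @ps_proj LP @^-1` [set c | S (cls_ps c)] =
    phi @^-1` (@top_proj LT @^-1` [set c | S (cls_top c)]).
  by apply/seteqP; split => m /=; rewrite cls_eq.
exact: Ropen_LP.
Qed.


Lemma Hpr_LP (a : LP) : @ps_conv LP (principal a) a.
Proof. apply/(@convLP (principal a) a (principal_ultra a)) => K O _ _ h; exact: h. Qed.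

Lemma claim3 (S : set (set (I01 -> X))) :
  Ropen (A := pi1_epi x0) [set c | S (cls_ps c)] <->
  qtop_open (x0 := x0) [set c | S (cls_top c)].
Proof. rewrite /pi1_epi /loop_epi Ropen_epi_ps; [exact: claim4 | exact: Hpr_LP]. Qed.

End Loops.

Unset Implicit Arguments.
Set Strict Implicit.

Theorem proposition6p5 (X : topologicalType) (x0 : X) :
  (* the three underlying sets of loop classes coincide *)
  (forall L : set (I01 -> X),
     (exists c : pi1_ps x0, cls_ps c = L) <-> (exists c : pi1_qtop x0, cls_top c = L))
  /\ (forall L : set (I01 -> X),
     (exists c : pi1_epi x0, cls_ps c = L) <-> (exists c : pi1_qtop x0, cls_top c = L))
  (* R_2 pi_1^epi = pi_1^qtop as topologies *)
  /\ (forall S : set (set (I01 -> X)),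
        Ropen (A := pi1_epi x0) [set c | S (cls_ps c)] <->
        qtop_open (x0 := x0) [set c | S (cls_top c)])
  (* R pi_1^ps = pi_1^qtop as topologies *)
  /\ (forall S : set (set (I01 -> X)),
        Ropen (A := pi1_ps x0) [set c | S (cls_ps c)] <->
        qtop_open (x0 := x0) [set c | S (cls_top c)]).
Proof.
split; first exact: claim1.
split; first exact: claim1.
split; first exact: claim3.
exact: claim4.
Qed.
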